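(* Let $f\in\mathbb R[x_1,\dots,x_n]$ be a circuit polynomial $f(x)=\sum_{j=0}^r f_{\alpha(j)}x^{\alpha(j)}+f_{\alpha^\star}x^{\alpha^\star}$ with $r\le n$ and barycentric coordinates $\lambda_0,\dots,\lambda_r$ of $\alpha^\star$, and set $\Theta=\prod_{j=0}^r(f_{\alpha(j)}/\lambda_j)^{\lambda_j}$. Then $f$ is coercive on $\mathbb R^n$ if and only if one of the following holds: (a) $r=n$ and $f$ satisfies (C1), (C2), (C3); (b) $r=n-1$, $f$ satisfies (C1), (C2), (C3), and moreover $f_{\alpha^\star}>-\Theta$ if $\alpha^\star\in 2\mathbb N_0^n$, while $|f_{\alpha^\star}|<\Theta$ if $\alpha^\star\notin 2\mathbb N_0^n$.
   Context: A polynomial is coercive on $\mathbb R^n$ if $f(x)\to+\infty$ as $\|x\|\to+\infty$. A circuit polynomial is $f(x)=\sum_{j=0}^r f_{\alpha(j)}x^{\alpha(j)}+f_{\alpha^\star}x^{\alpha^\star}$ (with $f_{\alpha^\star}\ne 0$ and $\alpha^\star\in\mathbb N_0^n$) such that: $r\le n$; $\alpha(j)\in 2\mathbb N_0^n$ and $f_{\alpha(j)}>0$ for all $j$; the vertex set of the Newton polytope $\mathrm{conv}(A(f))$ is exactly $\{\alpha(0),\dots,\alpha(r)\}$ and these points are affinely independent; and $\alpha^\star=\sum_{j=0}^r\lambda_j\alpha(j)$ uniquely with all $\lambda_j>0$, $\sum_j\lambda_j=1$. Here $A(f)$ is the set of exponents with nonzero coefficient. The Newton polytope at infinity is $\mathrm{New}_\infty(f)=\mathrm{conv}(A(f)\cup\{0\})$,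 $V_0(f)$ its vertex set and $V(f)=V_0(f)\setminus\{0\}$. Conditions: (C1) $V(f)\subset 2\mathbb N_0^n$; (C2) $f_\alpha>0$ for all $\alpha\in V(f)$; (C3) for every $i\in\{1,\dots,n\}$, $V(f)$ contains a vector $2k_ie_i$ with $k_i\in\mathbb N$ ($e_i$ standard unit vectors). *)

(* Defs.v *)
From Stdlib Require Import Reals Lra Lia Arith List.
Open Scope R_scope.

(* Points of R^n are represented as functions nat -> R; only the
   coordinates i < n matter.  Exponent vectors in N_0^n are nat -> nat. *)

Fixpoint rsum (m : nat) (g : nat -> R) : R :=
  match m with O => 0 | S k => rsum k g + g k end.
Fixpoint rprod (m : nat) (g : nat -> R) : R :=
  match m with O => 1 | S k => rprod k g * g k end.

Definition toR (b : nat -> nat) : nat -> R := fun i => INR (b i).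
Definition zeroPt : nat -> R := fun _ => 0.
Definition eqn_pt (n : nat) (p q : nat -> R) : Prop := forall i, (i < n)%nat -> p i = q i.

Definition monom (n : nat) (beta : nat -> nat) (x : nat -> R) : R :=
  rprod n (fun i => x i ^ beta i).

Definition norm2 (n : nat) (x : nat -> R) : R := sqrt (rsum n (fun i => x i ^ 2)).

Definition coercive (n : nat) (f : (nat -> R) -> R) : Prop :=
  forall M : R, exists K : R, forall x : nat -> R, norm2 n x > K -> f x > M.

Definition circ_eval (n r : nat) (alpha : nat -> nat -> nat) (c : nat -> R)
  (als : nat -> nat) (cs : R) (x : nat -> R) : R :=
  rsum (S r) (fun j => c j * monom n (alpha j) x) + cs * monom n als x.

Definition eqb_upto (n : nat) (b g : nat -> nat) : bool :=
  forallb (fun i => Nat.eqb (b i) (g i)) (seq 0 n).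

(* coefficient of the monomial x^beta in f (terms with equal exponent merged) *)
Definition coef (n r : nat) (alpha : nat -> nat -> nat) (c : nat -> R)
  (als : nat -> nat) (cs : R) (beta : nat -> nat) : R :=
  rsum (S r) (fun j => if eqb_upto n (alpha j) beta then c j else 0)
  + (if eqb_upto n als beta then cs else 0).

(* A(f): the exponents (among those appearing in the representation)
   whose coefficient is nonzero *)
Definition supp (n r : nat) (alpha : nat -> nat -> nat) (c : nat -> R)
  (als : nat -> nat) (cs : R) : list (nat -> nat) :=
  filter (fun b => if Req_EM_T (coef n r alpha c als cs b) 0 then false else true)
    (map alpha (seq 0 (S r)) ++ als :: nil).

Definition in_conv (n : nat) (S : list (nat -> R)) (p : nat -> R) : Prop :=
  exists w : nat -> R,
    (forall k, (k < length S)%nat -> 0 <= w k) /\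
    rsum (length S) w = 1 /\
    forall i, (i < n)%nat ->
      p i = rsum (length S) (fun k => w k * nth k S zeroPt i).

Definition is_vertex (n : nat) (S : list (nat -> R)) (p : nat -> R) : Prop :=
  in_conv n S p /\
  forall a b : nat -> R, forall t : R,
    in_conv n S a -> in_conv n S b -> 0 < t < 1 ->
    eqn_pt n p (fun i => t * a i + (1 - t) * b i) ->
    eqn_pt n a p /\ eqn_pt n b p.

Definition suppR n r alpha c als cs : list (nat -> R) :=
  map toR (supp n r alpha c als cs).
Definition suppR0 n r alpha c als cs : list (nat -> R) :=
  zeroPt :: suppR n r alpha c als cs.

Definition inV n r alpha c als cs (p : nat -> R) : Prop :=
  is_vertex n (suppR0 n r alpha c als cs) p /\ ~ eqn_pt n p zeroPt.

Definition even_vec (n : nat) (b : nat -> nat) : Prop :=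
  forall i, (i < n)%nat -> Nat.Even (b i).

Definition CondC1 n r alpha c als cs : Prop :=
  forall p, inV n r alpha c als cs p ->
    exists b : nat -> nat, eqn_pt n p (toR b) /\ even_vec n b.
Definition CondC2 n r alpha c als cs : Prop :=
  forall b : nat -> nat, inV n r alpha c als cs (toR b) ->
    coef n r alpha c als cs b > 0.
Definition CondC3 n r alpha c als cs : Prop :=
  forall i, (i < n)%nat -> exists k : nat, (1 <= k)%nat /\
    inV n r alpha c als cs (fun l => if Nat.eqb l i then INR (2 * k) else 0).

Definition aff_indep (n r : nat) (alpha : nat -> nat -> nat) : Prop :=
  forall mu : nat -> R,
    rsum (S r) mu = 0 ->
    (forall i, (i < n)%nat -> rsum (S r) (fun j => mu j * INR (alpha j i)) = 0) ->
    forall j, (j <= r)%nat -> mu j = 0.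

Definition bary (n r : nat) (alpha : nat -> nat -> nat) (als : nat -> nat)
  (lam : nat -> R) : Prop :=
  rsum (S r) lam = 1 /\
  forall i, (i < n)%nat -> INR (als i) = rsum (S r) (fun j => lam j * INR (alpha j i)).

Definition is_circuit (n r : nat) (alpha : nat -> nat -> nat) (c : nat -> R)
  (als : nat -> nat) (cs : R) : Prop :=
  (r <= n)%nat /\
  cs <> 0 /\
  (forall j, (j <= r)%nat -> even_vec n (alpha j) /\ c j > 0) /\
  (forall p : nat -> R, is_vertex n (suppR n r alpha c als cs) p <->
     exists j, (j <= r)%nat /\ eqn_pt n p (toR (alpha j))) /\
  aff_indep n r alpha /\
  (exists lam, bary n r alpha als lam /\ (forall j, (j <= r)%nat -> lam j > 0) /\
     forall mu, bary n r alpha als mu -> forall j, (j <= r)%nat -> mu j = lam j).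

Definition Theta (r : nat) (c lam : nat -> R) : R :=
  rprod (S r) (fun j => Rpower (c j / lam j) (lam j)).

(* Main.v *)
Require Import Defs.
From Stdlib Require Import Reals Lra Lia Arith List Classical.
Open Scope R_scope.

Lemma rsum_ext m g h : (forall i, (i < m)%nat -> g i = h i) -> rsum m g = rsum m h.
Proof. induction m; intros H; simpl; auto. rewrite IHm by (intros; apply H; lia). rewrite (H m) by lia; auto. Qed.

Lemma rsum_plus m g h : rsum m (fun i => g i + h i) = rsum m g + rsum m h.
Proof. induction m; simpl; [lra|]. rewrite IHm; lra. Qed.

Lemma rsum_minus m g h : rsum m (fun i => g i - h i) = rsum m g - rsum m h.
Proof. induction m; simpl; [lra|]. rewrite IHm; lra. Qed.

Lemma rsum_scal m a g : rsum m (fun i => a * g i) = a * rsum m g.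
Proof. induction m; simpl; [lra|]. rewrite IHm; lra. Qed.

Lemma rsum_zero m : rsum m (fun _ => 0) = 0.
Proof. induction m; simpl; [lra|]. rewrite IHm; lra. Qed.

Lemma rsum_nonneg m g : (forall i, (i < m)%nat -> 0 <= g i) -> 0 <= rsum m g.
Proof. induction m; intros H; simpl; [lra|]. assert (0 <= g m) by (apply H; lia).
 assert (0 <= rsum m g) by (apply IHm; intros; apply H; lia). lra. Qed.

Lemma rsum_le m g h : (forall i, (i < m)%nat -> g i <= h i) -> rsum m g <= rsum m h.
Proof. induction m; intros H; simpl; [lra|]. assert (g m <= h m) by (apply H; lia).
 assert (rsum m g <= rsum m h) by (apply IHm; intros; apply H; lia). lra. Qed.

Lemma rsum_single_le m g k : (forall i, (i < m)%nat -> 0 <= g i) -> (k < m)%nat -> g k <= rsum m g.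
Proof. induction m; intros H Hk; simpl; [lia|].
 assert (0 <= g m) by (apply H; lia).
 destruct (Nat.eq_dec k m) as [->|Hne].
 - assert (0 <= rsum m g) by (apply rsum_nonneg; intros; apply H; lia). lra.
 - assert (g k <= rsum m g) by (apply IHm; [intros; apply H; lia| lia]). lra. Qed.

Lemma rsum_ind m k h : (k < m)%nat -> rsum m (fun i => if Nat.eqb i k then h i else 0) = h k.
Proof. induction m; intros Hk; [lia|]. simpl.
 destruct (Nat.eq_dec k m) as [->|Hne].
 - rewrite Nat.eqb_refl. rewrite (rsum_ext m _ (fun _ => 0)). rewrite rsum_zero; lra.
   intros i Hi. destruct (Nat.eqb_spec i m); [lia|auto].
 - rewrite IHm by lia. destruct (Nat.eqb_spec m k); [lia|lra]. Qed.

Lemma rsum_ind' m k h : (k < m)%nat -> rsum m (fun i => if Nat.eqb k i then h i else 0) = h k.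
Proof. intros. rewrite <- (rsum_ind m k h) by auto. apply rsum_ext; intros. rewrite Nat.eqb_sym; auto. Qed.

Lemma rsum_swap m p (h : nat -> nat -> R) :
  rsum m (fun i => rsum p (fun j => h i j)) = rsum p (fun j => rsum m (fun i => h i j)).
Proof. induction m; simpl. - rewrite rsum_zero; auto.
 - rewrite IHm. rewrite <- rsum_plus. auto. Qed.

Lemma rsum_shift m h : rsum (S m) h = h 0%nat + rsum m (fun j => h (S j)).
Proof. induction m; simpl in *; [lra|]. rewrite IHm. lra. Qed.

Lemma rsum_pos_ex m w : rsum m w > 0 -> exists k, (k < m)%nat /\ w k > 0.
Proof. induction m; simpl; intros H; [lra|].
 destruct (Rlt_dec 0 (w m)). exists m; split; [lia|lra].
 destruct IHm as [k [Hk Hw]]; [lra|]. exists k; split; [lia|auto]. Qed.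

Lemma rsum_zero_nonneg m g : (forall i, (i < m)%nat -> 0 <= g i) -> rsum m g = 0 ->
  forall i, (i < m)%nat -> g i = 0.
Proof. intros H H0 i Hi. assert (g i <= rsum m g) by (apply rsum_single_le; auto).
 assert (0 <= g i) by auto. lra. Qed.

Lemma rsum_bound m g t : (forall i, (i < m)%nat -> g i <= t) -> rsum m g <= INR m * t.
Proof. induction m; intros H; simpl rsum; [simpl; lra|]. rewrite S_INR.
 assert (g m <= t) by (apply H; lia). assert (rsum m g <= INR m * t) by (apply IHm; intros; apply H; lia). lra. Qed.

Lemma rprod_exp m h : rprod m (fun j => exp (h j)) = exp (rsum m h).
Proof. induction m; simpl. rewrite exp_0; auto. rewrite IHm, exp_plus; auto. Qed.

Lemma rprod_ext m g h : (forall i, (i < m)%nat -> g i = h i) -> rprod m g = rprod m h.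
Proof. induction m; intros H; simpl; auto. rewrite IHm by (intros; apply H; lia). rewrite (H m) by lia; auto. Qed.

Lemma rprod_zero m g k : (k < m)%nat -> g k = 0 -> rprod m g = 0.
Proof. induction m; intros Hk H; [lia|]. simpl. destruct (Nat.eq_dec k m) as [->|]. rewrite H; ring.
 rewrite IHm by (auto; lia). ring. Qed.

Lemma Rdiv_le_0_compat a b : 0 <= a -> 0 < b -> 0 <= a / b.
Proof. intros. unfold Rdiv. apply Rmult_le_pos; auto. left; apply Rinv_0_lt_compat; auto. Qed.

Lemma monom_ext_x n b x y : (forall i, (i < n)%nat -> x i = y i) -> monom n b x = monom n b y.
Proof. intros H; unfold monom; apply rprod_ext; intros; rewrite H; auto. Qed.

Lemma monom_ext_b n b b' x : (forall i, (i < n)%nat -> b i = b' i) -> monom n b x = monom n b' x.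
Proof. intros H; unfold monom; apply rprod_ext; intros; rewrite H; auto. Qed.

Lemma pow_even_nonneg x k : 0 <= x ^ (2 * k).
Proof. rewrite pow_mult. apply pow_le. nra. Qed.

Lemma pow_even_opp x k : (- x) ^ (2 * k) = x ^ (2 * k).
Proof. rewrite !pow_mult. f_equal. ring. Qed.

Lemma monom_even_nonneg n b x : even_vec n b -> 0 <= monom n b x.
Proof. unfold monom, even_vec. induction n; intros H; simpl; [lra|].
 destruct (H n) as [k Hk]; [lia|]. rewrite Hk.
 apply Rmult_le_pos. apply IHn; intros; apply H; lia. apply pow_even_nonneg. Qed.

Lemma pow_abs_exp x k : (k = 0%nat \/ x <> 0) -> Rabs (x ^ k) = exp (INR k * ln (Rabs x)).
Proof. intros H. rewrite <- RPow_abs. destruct H as [->|H]. simpl. rewrite Rmult_0_l, exp_0; auto.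
 rewrite <- ln_pow by (apply Rabs_pos_lt; auto). rewrite exp_ln; auto.
 apply pow_lt. apply Rabs_pos_lt; auto. Qed.

Lemma monom_exp n b x : (forall i, (i < n)%nat -> (0 < b i)%nat -> x i <> 0) ->
  Rabs (monom n b x) = exp (rsum n (fun i => INR (b i) * ln (Rabs (x i)))).
Proof. unfold monom. induction n; intros H; simpl. rewrite exp_0, Rabs_R1; auto.
 rewrite Rabs_mult, IHn, exp_plus by (intros; apply H; lia). f_equal.
 apply pow_abs_exp. destruct (b n) eqn:E; auto. right; apply H; lia. Qed.

Lemma monom_exp_pos n b e : monom n b (fun l => exp (e l)) = exp (rsum n (fun l => INR (b l) * e l)).
Proof. unfold monom. induction n; simpl. rewrite exp_0; auto.
 rewrite IHn, exp_plus. f_equal. rewrite <- (ln_exp (e n)) at 2. rewrite <- ln_pow by apply exp_pos.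
 rewrite exp_ln; auto. apply pow_lt, exp_pos. Qed.

Lemma monom_axis n b x i : (i < n)%nat -> (forall l, (l < n)%nat -> l <> i -> b l = 0%nat) ->
  monom n b x = x i ^ b i.
Proof. unfold monom. induction n; intros Hi H; [lia|]. simpl.
 destruct (Nat.eq_dec i n) as [->|Hne].
 - rewrite (rprod_ext n _ (fun _ => 1)). 2:{ intros l Hl. rewrite H by lia. auto. }
   assert (forall m, rprod m (fun _ => 1) = 1) as E by (induction m; simpl; [auto| rewrite IHm; ring]).
   rewrite E; ring.
 - rewrite IHn by (auto; lia). rewrite (H n) by lia. simpl; ring. Qed.

Lemma monom_zero n b x l : (l < n)%nat -> (0 < b l)%nat -> x l = 0 -> monom n b x = 0.
Proof. intros Hl Hb Hx. unfold monom. apply (rprod_zero _ _ l Hl). rewrite Hx.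
 destruct (b l); [lia|]. simpl; ring. Qed.

Lemma monom_flip n b x l0 : (l0 < n)%nat ->
  monom n b (fun l => if Nat.eqb l l0 then - x l else x l) = (-1) ^ (b l0) * monom n b x.
Proof. unfold monom. induction n; intros Hl; [lia|]. simpl.
 destruct (Nat.eq_dec l0 n) as [->|Hne].
 - rewrite Nat.eqb_refl. rewrite (rprod_ext n _ (fun i => x i ^ b i)).
   2:{ intros i Hi. destruct (Nat.eqb_spec i n); [lia|auto]. }
   replace (- x n) with ((-1) * x n) by ring. rewrite Rpow_mult_distr. ring.
 - rewrite IHn by lia. destruct (Nat.eqb_spec n l0); [lia|]. ring. Qed.

Lemma in_conv_eqn n S p q : in_conv n S p -> eqn_pt n p q -> in_conv n S q.
Proof. intros [w [H1 [H2 H3]]] He. exists w; repeat split; auto. intros i Hi. rewrite <- He by auto. auto. Qed.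

Lemma is_vertex_eqn n S p q : is_vertex n S p -> eqn_pt n p q -> is_vertex n S q.
Proof. intros [Hc Hx] He. split. eapply in_conv_eqn; eauto.
 intros a b t Ha Hb Ht Hq. assert (eqn_pt n p (fun i => t * a i + (1 - t) * b i)) as Hp.
 { intros i Hi. rewrite He by auto. auto. }
 destruct (Hx a b t Ha Hb Ht Hp) as [E1 E2]. split; intros i Hi; rewrite <- He by auto; auto. Qed.

Lemma in_conv_mem n S s : In s S -> in_conv n S s.
Proof. intros Hs. destruct (In_nth S s zeroPt Hs) as [k [Hk Hn]].
 exists (fun l => if Nat.eqb l k then 1 else 0). repeat split.
 - intros l _. destruct (Nat.eqb l k); lra.
 - apply (rsum_ind _ _ (fun _ => 1)); auto.
 - intros i Hi. rewrite (rsum_ext _ _ (fun l => if Nat.eqb l k then nth l S zeroPt i else 0)).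
   rewrite rsum_ind by auto. rewrite Hn; auto.
   intros l _. destruct (Nat.eqb l k); ring. Qed.

Lemma in_conv_cons n S z q : in_conv n S q -> in_conv n (z :: S) q.
Proof. intros [w [H1 [H2 H3]]].
 exists (fun k => match k with O => 0 | S k' => w k' end). simpl length. repeat split.
 - intros [|k] Hk; [lra|]. apply H1; lia.
 - rewrite rsum_shift. replace (rsum (length S) _) with (rsum (length S) w) by (apply rsum_ext; auto). rewrite H2. lra.
 - intros i Hi. rewrite rsum_shift. rewrite H3 by auto. simpl. replace (rsum (length S) _) with (rsum (length S) (fun k => w k * nth k S zeroPt i)) by (apply rsum_ext; auto). lra. Qed.

Lemma in_conv_comb2 n S a b t : in_conv n S a -> in_conv n S b -> 0 <= t <= 1 ->
  in_conv n S (fun i => t * a i + (1 - t) * b i).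
Proof. intros [wa [Ha1 [Ha2 Ha3]]] [wb [Hb1 [Hb2 Hb3]]] Ht.
 exists (fun k => t * wa k + (1 - t) * wb k). repeat split.
 - intros k Hk. specialize (Ha1 k Hk). specialize (Hb1 k Hk). nra.
 - rewrite rsum_plus, !rsum_scal, Ha2, Hb2. ring.
 - intros i Hi. rewrite Ha3, Hb3 by auto. rewrite <- !rsum_scal, <- rsum_plus.
   apply rsum_ext; intros; ring. Qed.

Lemma conv_comb n S m (mu : nat -> R) (P : nat -> nat -> R) :
  (forall j, (j < m)%nat -> in_conv n S (P j)) -> (forall j, (j < m)%nat -> 0 <= mu j) ->
  rsum m mu = 1 -> in_conv n S (fun i => rsum m (fun j => mu j * P j i)).
Proof. revert mu. induction m; intros mu HP Hmu Hs; simpl in Hs. lra.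
 assert (0 <= rsum m mu) by (apply rsum_nonneg; intros; apply Hmu; lia).
 assert (0 <= mu m) by (apply Hmu; lia).
 destruct (Req_dec (mu m) 1) as [E|E].
 - assert (forall j, (j < m)%nat -> mu j = 0) as Z.
   { apply rsum_zero_nonneg; [intros; apply Hmu; lia| lra]. }
   apply (in_conv_eqn _ _ (P m)). apply HP; lia.
   intros i Hi. simpl. rewrite (rsum_ext _ _ (fun _ => 0)). rewrite rsum_zero, E. ring.
   intros j Hj; rewrite Z by auto; ring.
 - set (t := mu m).
   assert (Hq : in_conv n S (fun i => rsum m (fun j => (mu j / (1 - t)) * P j i))).
   { apply IHm. intros; apply HP; lia. intros j Hj. apply Rdiv_le_0_compat. apply Hmu; lia. unfold t; lra.
     unfold Rdiv. rewrite (rsum_ext _ _ (fun j => / (1 - t) * mu j)) by (intros; ring).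
     rewrite rsum_scal. replace (rsum m mu) with (1 - t) by (unfold t; lra). field. unfold t; lra. }
   apply (in_conv_eqn _ _ _ _ (in_conv_comb2 _ _ _ _ t (HP m (Nat.lt_succ_diag_r m)) Hq ltac:(unfold t; lra))).
   intros i Hi. simpl. unfold Rdiv.
   rewrite (rsum_ext _ (fun j => mu j * / (1 - t) * P j i) (fun j => / (1 - t) * (mu j * P j i))) by (intros; ring).
   rewrite rsum_scal. unfold t. field. unfold t in *. lra. Qed.

Lemma vert_in n S p : is_vertex n S p -> exists s, In s S /\ eqn_pt n p s.
Proof. intros [[w [H1 [H2 H3]]] Hx].
 destruct (rsum_pos_ex (length S) w) as [k [Hk Hw]]; [lra|].
 assert (w k <= 1) by (rewrite <- H2; apply rsum_single_le; auto).
 set (t := w k / 2). set (a := nth k S zeroPt).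
 set (b := fun i => (p i - t * a i) / (1 - t)).
 assert (Ha : in_conv n S a) by (apply in_conv_mem; apply nth_In; auto).
 assert (Hb : in_conv n S b).
 { exists (fun l => (w l - (if Nat.eqb l k then t else 0)) / (1 - t)). repeat split.
   - intros l Hl. apply Rdiv_le_0_compat; [|unfold t; lra]. destruct (Nat.eqb_spec l k).
     subst; unfold t; lra. specialize (H1 l Hl); lra.
   - unfold Rdiv. rewrite (rsum_ext _ _ (fun l => / (1 - t) * (w l - (if Nat.eqb l k then t else 0)))) by (intros; ring).
     rewrite rsum_scal, rsum_minus, H2, (rsum_ind _ _ (fun _ => t)) by auto. field; unfold t; lra.
   - intros i Hi. unfold b. unfold Rdiv.
     rewrite (rsum_ext _ _ (fun l => / (1 - t) * (w l * nth l S zeroPt i - (if Nat.eqb l k then t * nth l S zeroPt i else 0)))).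
     2:{ intros l _. destruct (Nat.eqb l k); ring. }
     rewrite rsum_scal, rsum_minus, (rsum_ind _ _ (fun l => t * nth l S zeroPt i)) by auto.
     rewrite <- H3 by auto. unfold a. ring. }
 destruct (Hx a b t Ha Hb) as [E _]. unfold t; lra.
 { intros i Hi. unfold b. field. unfold t; lra. }
 exists a. split. apply nth_In; auto. intros i Hi; rewrite E; auto. Qed.

Lemma in_conv_nonneg n S a : (forall s, In s S -> forall l, (l < n)%nat -> 0 <= s l) ->
  in_conv n S a -> forall l, (l < n)%nat -> 0 <= a l.
Proof. intros HS [w [H1 [H2 H3]]] l Hl. rewrite H3 by auto. apply rsum_nonneg. intros k Hk.
 apply Rmult_le_pos; auto. apply HS; auto. apply nth_In; auto. Qed.

Lemma axis_bound n S i Mx a : (i < n)%nat ->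
  (forall s, In s S -> forall l, (l < n)%nat -> 0 <= s l) ->
  (forall s, In s S -> (forall l, (l < n)%nat -> l <> i -> s l = 0) -> s i <= Mx) ->
  in_conv n S a -> (forall l, (l < n)%nat -> l <> i -> a l = 0) -> a i <= Mx.
Proof. intros Hi HS HM [w [H1 [H2 H3]]] Ha.
 set (D := fun (s : nat -> R) => rsum n (fun l => if Nat.eqb l i then 0 else s l)).
 assert (HD : rsum (length S) (fun k => w k * D (nth k S zeroPt)) = 0).
 { unfold D. rewrite (rsum_ext _ _ (fun k => rsum n (fun l => if Nat.eqb l i then 0 else w k * nth k S zeroPt l))).
   2:{ intros k _. rewrite <- rsum_scal. apply rsum_ext; intros; destruct (Nat.eqb _ _); ring. }
   rewrite rsum_swap. rewrite (rsum_ext _ _ (fun _ => 0)). apply rsum_zero.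
   intros l Hl. destruct (Nat.eqb_spec l i). apply rsum_zero. rewrite <- H3 by auto. apply Ha; auto. }
 assert (Hnn : forall k, (k < length S)%nat -> 0 <= w k * D (nth k S zeroPt)).
 { intros k Hk. apply Rmult_le_pos; auto. apply rsum_nonneg; intros l Hl. destruct (Nat.eqb l i); [lra|].
   apply HS; auto. apply nth_In; auto. }
 pose proof (rsum_zero_nonneg _ _ Hnn HD) as Z.
 rewrite H3 by auto. rewrite <- (Rmult_1_r Mx), <- H2, <- rsum_scal.
 apply rsum_le. intros k Hk. specialize (Z k Hk). set (s := nth k S zeroPt) in *.
 assert (Hs : In s S) by (apply nth_In; auto).
 destruct (Req_dec (w k) 0) as [E|E]. rewrite E; lra.
 assert (D s = 0) as DZ. { destruct (Rmult_integral _ _ Z); [contradiction|auto]. }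
 assert (s i <= Mx). { apply HM; auto. intros l Hl Hli.
   assert (Hnn2 : forall l, (l < n)%nat -> 0 <= (fun l => if Nat.eqb l i then 0 else s l) l).
   { intros l' Hl'. destruct (Nat.eqb l' i); [lra|]. apply HS; auto. }
   pose proof (rsum_zero_nonneg _ _ Hnn2 DZ l Hl) as Q. simpl in Q. destruct (Nat.eqb_spec l i); [lia|auto]. }
 specialize (H1 k Hk). nra. Qed.

Definition HYP n r alpha c als cs lam :=
  is_circuit n r alpha c als cs /\ bary n r alpha als lam /\ (forall j, (j <= r)%nat -> lam j > 0).

Lemma eqb_upto_spec n b g : eqb_upto n b g = true <-> (forall i, (i < n)%nat -> b i = g i).
Proof. unfold eqb_upto. rewrite forallb_forall. split.
 - intros H i Hi. apply Nat.eqb_eq. apply H. apply in_seq; lia.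
 - intros H x Hx. apply in_seq in Hx. apply Nat.eqb_eq. apply H; lia. Qed.

Lemma eqb_upto_false n b g : eqb_upto n b g = false <-> ~ (forall i, (i < n)%nat -> b i = g i).
Proof. rewrite <- eqb_upto_spec. destruct (eqb_upto n b g); split; intros; try congruence; auto. Qed.

Lemma eqb_upto_ext n x b b' : (forall i, (i < n)%nat -> b i = b' i) -> eqb_upto n x b = eqb_upto n x b'.
Proof. intros H. destruct (eqb_upto n x b) eqn:E1, (eqb_upto n x b') eqn:E2; auto.
 - rewrite eqb_upto_spec in E1. rewrite eqb_upto_false in E2. exfalso; apply E2; intros; rewrite <- H; auto.
 - rewrite eqb_upto_spec in E2. rewrite eqb_upto_false in E1. exfalso; apply E1; intros; rewrite H; auto. Qed.

Lemma coef_ext n r alpha c als cs b b' : (forall i, (i < n)%nat -> b i = b' i) ->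
  coef n r alpha c als cs b = coef n r alpha c als cs b'.
Proof. intros H. unfold coef. rewrite (eqb_upto_ext n als b b' H). f_equal.
 apply rsum_ext; intros. rewrite (eqb_upto_ext n (alpha i) b b' H); auto. Qed.

Lemma lam_unique n r alpha c als cs lam : HYP n r alpha c als cs lam ->
  forall mu, bary n r alpha als mu -> forall j, (j <= r)%nat -> mu j = lam j.
Proof. intros [[_ [_ [_ [_ [_ [l0 [Hb0 [_ Hu]]]]]]]] [Hb _]] mu Hmu j Hj.
 rewrite (Hu mu Hmu j Hj), (Hu lam Hb j Hj); auto. Qed.

Lemma distinct_alpha n r alpha c als cs lam : HYP n r alpha c als cs lam ->
  forall j l, (j <= r)%nat -> (l <= r)%nat -> (forall i, (i < n)%nat -> alpha j i = alpha l i) -> j = l.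
Proof. intros [[_ [_ [_ [_ [Haff _]]]]] _] j l Hj Hl Heq.
 destruct (Nat.eq_dec j l); auto. exfalso.
 set (mu := fun k => (if Nat.eqb k j then 1 else 0) - (if Nat.eqb k l then 1 else 0)).
 assert (mu j = 0). { apply Haff; auto.
  - unfold mu. rewrite rsum_minus, (rsum_ind _ _ (fun _ => 1)), (rsum_ind _ _ (fun _ => 1)) by lia. ring.
  - intros i Hi. unfold mu. rewrite (rsum_ext _ _ (fun k => (if Nat.eqb k j then INR (alpha k i) else 0) - (if Nat.eqb k l then INR (alpha k i) else 0))).
    rewrite rsum_minus, !rsum_ind by lia. rewrite Heq by auto. ring.
    intros k _. destruct (Nat.eqb k j), (Nat.eqb k l); ring. }
 unfold mu in H. rewrite Nat.eqb_refl in H. destruct (Nat.eqb_spec j l); [lia|lra]. Qed.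

Lemma als_not_alpha n r alpha c als cs lam : HYP n r alpha c als cs lam -> (1 <= r)%nat ->
  forall j, (j <= r)%nat -> ~ (forall i, (i < n)%nat -> als i = alpha j i).
Proof. intros HH Hr j Hj Heq. pose proof HH as [_ [_ Hpos]].
 set (mu := fun k => if Nat.eqb k j then 1 else 0).
 assert (Hb : bary n r alpha als mu).
 { split. apply (rsum_ind _ _ (fun _ => 1)); lia.
   intros i Hi. rewrite (rsum_ext _ _ (fun k => if Nat.eqb k j then INR (alpha k i) else 0)).
   rewrite rsum_ind by lia. rewrite Heq; auto. intros k _; unfold mu; destruct (Nat.eqb k j); ring. }
 set (l := if Nat.eqb j 0 then 1%nat else 0%nat).
 assert (l <= r /\ l <> j)%nat as [Hl Hlj] by (unfold l; destruct (Nat.eqb_spec j 0); lia).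
 pose proof (lam_unique _ _ _ _ _ _ _ HH mu Hb l Hl). unfold mu in H.
 destruct (Nat.eqb_spec l j); [lia|]. specialize (Hpos l Hl). lra. Qed.

Lemma r0_als n r alpha c als cs lam : HYP n r alpha c als cs lam -> r = 0%nat ->
  forall i, (i < n)%nat -> als i = alpha 0%nat i.
Proof. intros [_ [[H1 H2] _]] -> i Hi. specialize (H2 i Hi). simpl in H1, H2.
 apply INR_eq. rewrite H2. replace (lam 0%nat) with 1 by lra. ring. Qed.

Lemma coef_alpha n r alpha c als cs lam : HYP n r alpha c als cs lam -> (1 <= r)%nat ->
  forall j b, (j <= r)%nat -> (forall i, (i < n)%nat -> b i = alpha j i) -> coef n r alpha c als cs b = c j.
Proof. intros HH Hr j b Hj Hb. rewrite (coef_ext _ _ _ _ _ _ b (alpha j) Hb). unfold coef.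
 destruct (eqb_upto n als (alpha j)) eqn:E.
 { exfalso. rewrite eqb_upto_spec in E. apply (als_not_alpha _ _ _ _ _ _ _ HH Hr j Hj E). }
 rewrite (rsum_ext _ _ (fun l => if Nat.eqb l j then c l else 0)). rewrite rsum_ind by lia. ring.
 intros l Hl. destruct (Nat.eqb_spec l j). subst. rewrite (proj2 (eqb_upto_spec _ _ _)); auto.
 destruct (eqb_upto n (alpha l) (alpha j)) eqn:E2; auto. rewrite eqb_upto_spec in E2.
 exfalso; apply n0. apply (distinct_alpha _ _ _ _ _ _ _ HH); auto; lia. Qed.

Lemma coef_r0 n r alpha c als cs lam : HYP n r alpha c als cs lam -> r = 0%nat ->
  forall b, (forall i, (i < n)%nat -> b i = alpha 0%nat i) -> coef n r alpha c als cs b = c 0%nat + cs.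
Proof. intros HH Hr b Hb. pose proof (r0_als _ _ _ _ _ _ _ HH Hr) as Ha. subst r.
 unfold coef. simpl. rewrite (proj2 (eqb_upto_spec n (alpha 0%nat) b)).
 rewrite (proj2 (eqb_upto_spec n als b)). ring. intros; rewrite Hb, Ha; auto. intros; rewrite Hb; auto. Qed.

Lemma supp_class n r alpha c als cs b : In b (supp n r alpha c als cs) ->
  (exists j, (j <= r)%nat /\ b = alpha j) \/ b = als.
Proof. unfold supp. intros H. apply filter_In in H as [H _]. apply in_app_iff in H as [H|[H|[]]]; auto.
 left. apply in_map_iff in H as [j [<- Hj]]. apply in_seq in Hj. exists j; split; auto; lia. Qed.

Lemma suppR0_class n r alpha c als cs s : In s (suppR0 n r alpha c als cs) ->
  s = zeroPt \/ exists b, In b (supp n r alpha c als cs) /\ s = toR b.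
Proof. unfold suppR0, suppR. intros [H|H]; auto. right. apply in_map_iff in H as [b [<- Hb]]. eauto. Qed.

Lemma suppR0_nonneg n r alpha c als cs : forall s, In s (suppR0 n r alpha c als cs) -> forall l, (l < n)%nat -> 0 <= s l.
Proof. intros s Hs l Hl. destruct (suppR0_class _ _ _ _ _ _ _ Hs) as [->|[b [_ ->]]]. unfold zeroPt; lra. apply pos_INR. Qed.

Lemma alpha_in_conv0 n r alpha c als cs lam : HYP n r alpha c als cs lam ->
  forall j, (j <= r)%nat -> in_conv n (suppR0 n r alpha c als cs) (toR (alpha j)).
Proof. intros [[_ [_ [_ [Hv _]]]] _] j Hj. unfold suppR0. apply in_conv_cons.
 assert (is_vertex n (suppR n r alpha c als cs) (toR (alpha j))) as [H _]; auto.
 apply Hv. exists j; split; auto. intros i _; auto. Qed.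

Lemma als_not_vertex n r alpha c als cs lam : HYP n r alpha c als cs lam -> (1 <= r)%nat ->
  ~ is_vertex n (suppR0 n r alpha c als cs) (toR als).
Proof. intros HH Hr [_ Hx]. pose proof HH as [_ [[Hb1 Hb2] Hpos]].
 assert (Hsh : lam 0%nat + rsum r (fun j => lam (S j)) = 1) by (rewrite <- rsum_shift; auto).
 assert (lam 1%nat <= rsum r (fun j => lam (S j))).
 { apply (rsum_single_le _ (fun j => lam (S j)) 0). intros; left; apply Hpos; lia. lia. }
 assert (lam 1%nat > 0) by (apply Hpos; lia). assert (lam 0%nat > 0) by (apply Hpos; lia).
 set (t := lam 0%nat).
 set (q := fun i => rsum r (fun j => (lam (S j) / (1 - t)) * toR (alpha (S j)) i)).
 assert (Hq : in_conv n (suppR0 n r alpha c als cs) q).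
 { apply conv_comb. intros; apply (alpha_in_conv0 _ _ _ _ _ _ _ HH); lia.
   intros j Hj. apply Rdiv_le_0_compat. left; apply Hpos; lia. unfold t; lra.
   unfold Rdiv. rewrite (rsum_ext _ _ (fun j => / (1 - t) * lam (S j))) by (intros; ring).
   rewrite rsum_scal. replace (rsum r _) with (1 - t) by (unfold t; lra). field; unfold t; lra. }
 destruct (Hx (toR (alpha 0%nat)) q t (alpha_in_conv0 _ _ _ _ _ _ _ HH 0%nat ltac:(lia)) Hq) as [E _].
 unfold t; lra.
 { intros i Hi. unfold toR at 1. rewrite Hb2 by auto. rewrite rsum_shift. unfold q.
   assert (E : rsum r (fun j => lam (S j) / (1 - t) * toR (alpha (S j)) i) = / (1-t) * rsum r (fun j => lam (S j) * INR (alpha (S j) i)))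
     by (rewrite <- rsum_scal; apply rsum_ext; intros; unfold toR, Rdiv; ring).
   rewrite E. unfold toR. fold t. field. unfold t; lra. }
 apply (als_not_alpha _ _ _ _ _ _ _ HH Hr 0%nat ltac:(lia)). intros i Hi. apply INR_eq. symmetry. apply (E i Hi). Qed.

Lemma V_main n r alpha c als cs lam : HYP n r alpha c als cs lam ->
  forall p, inV n r alpha c als cs p -> exists j, (j <= r)%nat /\ eqn_pt n p (toR (alpha j)).
Proof. intros HH p [Hv Hnz]. destruct (vert_in _ _ _ Hv) as [s [Hs Hps]].
 destruct (suppR0_class _ _ _ _ _ _ _ Hs) as [->|[b [Hb ->]]]. contradiction.
 destruct (supp_class _ _ _ _ _ _ _ Hb) as [[j [Hj ->]]| ->]. eauto.
 destruct r as [|r'].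
 - exists 0%nat; split; auto. intros i Hi. rewrite Hps by auto. unfold toR. rewrite (r0_als _ _ _ _ _ _ _ HH eq_refl) by auto; auto.
 - exfalso. apply (als_not_vertex _ _ _ _ _ _ _ HH ltac:(lia)). eapply is_vertex_eqn; eauto. Qed.

Definition axpt (i : nat) (t : R) : nat -> R := fun l => if Nat.eqb l i then t else 0.
Definition on_ax (n i : nat) (b : nat -> nat) := forall l, (l < n)%nat -> l <> i -> b l = 0%nat.

Lemma norm2_axpt n i t : (i < n)%nat -> norm2 n (axpt i t) = Rabs t.
Proof. intros Hi. unfold norm2, axpt. rewrite (rsum_ext _ _ (fun l => if Nat.eqb l i then t ^ 2 else 0)).
 rewrite (rsum_ind _ _ (fun _ => t ^ 2)) by auto. rewrite <- Rsqr_pow2, sqrt_Rsqr_abs; auto.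
 intros l _. destruct (Nat.eqb l i); simpl; ring. Qed.

Lemma norm2_ge n x i : (i < n)%nat -> Rabs (x i) <= norm2 n x.
Proof. intros Hi. unfold norm2. rewrite <- sqrt_Rsqr_abs. apply sqrt_le_1_alt. rewrite Rsqr_pow2.
 apply (rsum_single_le _ (fun i => x i ^ 2)); auto. intros; apply pow2_ge_0. Qed.

Lemma monom_axpt_const n b i t t' : (i < n)%nat -> (on_ax n i b -> b i = 0%nat) ->
  monom n b (axpt i t) = monom n b (axpt i t').
Proof. intros Hi H. destruct (classic (on_ax n i b)) as [Ho|Ho].
 - rewrite !(monom_axis n b _ i Hi Ho). rewrite H by auto. auto.
 - unfold on_ax in Ho. apply not_all_ex_not in Ho as [l Ho].
   apply imply_to_and in Ho as [Hl Ho]. apply imply_to_and in Ho as [Hli Ho].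
   rewrite !(monom_zero n b _ l Hl) by (try lia; unfold axpt; destruct (Nat.eqb_spec l i); auto; lia). auto. Qed.

Lemma als_on_ax_alpha n r alpha c als cs lam : HYP n r alpha c als cs lam -> forall i,
  on_ax n i als -> forall j, (j <= r)%nat -> on_ax n i (alpha j).
Proof. intros [_ [[_ Hb2] Hpos]] i Ho j Hj l Hl Hli.
 assert (Z : rsum (S r) (fun j => lam j * INR (alpha j l)) = 0) by (rewrite <- Hb2, Ho; auto).
 assert (forall k, (k < S r)%nat -> 0 <= lam k * INR (alpha k l)).
 { intros k Hk. apply Rmult_le_pos. left; apply Hpos; lia. apply pos_INR. }
 pose proof (rsum_zero_nonneg _ _ H Z j ltac:(lia)). simpl in H0.
 assert (INR (alpha j l) = 0). { destruct (Rmult_integral _ _ H0); auto. specialize (Hpos j Hj); lra. }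
 apply INR_eq; auto. Qed.

Lemma step1 n r alpha c als cs lam : HYP n r alpha c als cs lam -> coercive n (circ_eval n r alpha c als cs) ->
  forall i, (i < n)%nat -> exists j, (j <= r)%nat /\ on_ax n i (alpha j) /\ (1 <= alpha j i)%nat.
Proof. intros HH Hco i Hi. apply NNPP; intros Hn.
 assert (Hj : forall j, (j <= r)%nat -> on_ax n i (alpha j) -> alpha j i = 0%nat).
 { intros j Hj Ho. destruct (alpha j i) eqn:E; auto. exfalso; apply Hn; exists j; repeat split; auto. rewrite E; lia. }
 assert (Ha : on_ax n i als -> als i = 0%nat).
 { intros Ho. pose proof HH as [_ [[_ Hb2] _]]. apply INR_eq. rewrite Hb2 by auto.
   rewrite (rsum_ext _ _ (fun _ => 0)). apply rsum_zero. intros j Hjr. rewrite Hj. simpl; ring. lia.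
   apply (als_on_ax_alpha _ _ _ _ _ _ _ HH i Ho); lia. }
 assert (Hc : forall t, circ_eval n r alpha c als cs (axpt i t) = circ_eval n r alpha c als cs (axpt i 0)).
 { intros t. unfold circ_eval. rewrite (monom_axpt_const n als i t 0 Hi Ha). f_equal.
   apply rsum_ext. intros j Hjr. rewrite (monom_axpt_const n (alpha j) i t 0 Hi); auto. apply Hj; lia. }
 destruct (Hco (circ_eval n r alpha c als cs (axpt i 0))) as [K HK].
 specialize (HK (axpt i (Rabs K + 1))). rewrite norm2_axpt, Hc in HK by auto.
 assert (K <= Rabs K) by apply Rle_abs. assert (0 <= Rabs K) by apply Rabs_pos.
 rewrite Rabs_right in HK by lra. lra. Qed.

Lemma max_exists m (P : nat -> Prop) (h : nat -> nat) : (exists j, (j <= m)%nat /\ P j) ->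
  exists j, (j <= m)%nat /\ P j /\ forall j', (j' <= m)%nat -> P j' -> (h j' <= h j)%nat.
Proof. induction m; intros [j0 [Hj0 HP0]].
 - exists 0%nat. assert (j0 = 0%nat) by lia; subst. repeat split; auto. intros j' Hj' _. assert (j' = 0%nat) by lia; subst; auto.
 - destruct (classic (exists j, (j <= m)%nat /\ P j)) as [Ex|Nex].
   + destruct (IHm Ex) as [j [Hj [HPj Hmax]]].
     destruct (classic (P (S m))) as [HPS|HPS].
     * destruct (le_lt_dec (h (S m)) (h j)).
       { exists j; repeat split; auto. intros j' Hj' HP'. destruct (Nat.eq_dec j' (S m)); [subst; auto|]. apply Hmax; auto; lia. }
       { exists (S m); repeat split; auto. intros j' Hj' HP'. destruct (Nat.eq_dec j' (S m)); [subst; auto|].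
         specialize (Hmax j' ltac:(lia) HP'); lia. }
     * exists j; repeat split; auto. intros j' Hj' HP'. destruct (Nat.eq_dec j' (S m)); [subst; contradiction|]. apply Hmax; auto; lia.
   + assert (j0 = S m). { destruct (Nat.eq_dec j0 (S m)); auto. exfalso; apply Nex; exists j0; split; auto; lia. }
     subst. exists (S m); repeat split; auto. intros j' Hj' HP'. destruct (Nat.eq_dec j' (S m)); [subst; auto|].
     exfalso; apply Nex; exists j'; split; auto; lia. Qed.

Lemma axis_vertex n r alpha c als cs lam : HYP n r alpha c als cs lam -> coercive n (circ_eval n r alpha c als cs) ->
  forall i, (i < n)%nat -> exists j, (j <= r)%nat /\ on_ax n i (alpha j) /\ (1 <= alpha j i)%nat /\
    is_vertex n (suppR0 n r alpha c als cs) (toR (alpha j)).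
Proof. intros HH Hco i Hi.
 destruct (step1 _ _ _ _ _ _ _ HH Hco i Hi) as [j0 [Hj0 [Ho0 Hge0]]].
 destruct (max_exists r (fun j => on_ax n i (alpha j)) (fun j => alpha j i)) as [j [Hj [Ho Hmax]]]; [eauto|].
 assert (Hge : (1 <= alpha j i)%nat) by (specialize (Hmax j0 Hj0 Ho0); lia).
 exists j; split; [auto|split; [auto|split; [auto|]]]. split.
 - apply (alpha_in_conv0 _ _ _ _ _ _ _ HH); auto.
 - set (S0 := suppR0 n r alpha c als cs).
   assert (HM : forall s, In s S0 -> (forall l, (l < n)%nat -> l <> i -> s l = 0) -> s i <= INR (alpha j i)).
   { intros s Hs Hso. destruct (suppR0_class _ _ _ _ _ _ _ Hs) as [->|[bb [Hb ->]]]. unfold zeroPt; apply pos_INR.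
     assert (Hob : on_ax n i bb). { intros l Hl Hli. apply INR_eq. apply Hso; auto. }
     destruct (supp_class _ _ _ _ _ _ _ Hb) as [[j' [Hj' ->]]| ->].
     - apply le_INR. apply Hmax; auto.
     - pose proof HH as [_ [[Hb1 Hb2] Hpos]]. unfold toR. rewrite Hb2 by auto.
       rewrite <- (Rmult_1_l (INR (alpha j i))), <- Hb1, Rmult_comm, <- rsum_scal.
       apply rsum_le. intros k Hk.
       assert (INR (alpha k i) <= INR (alpha j i)) by (apply le_INR; apply Hmax; [lia| apply (als_on_ax_alpha _ _ _ _ _ _ _ HH i Hob); lia]).
       assert (lam k > 0) by (apply Hpos; lia). nra. }
   assert (key : forall a b t, in_conv n S0 a -> in_conv n S0 b -> 0 < t < 1 ->
        eqn_pt n (toR (alpha j)) (fun i0 => t * a i0 + (1 - t) * b i0) -> eqn_pt n a (toR (alpha j))).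
   { intros a b t Ha Hb Ht Heq.
     pose proof (in_conv_nonneg _ _ _ (suppR0_nonneg n r alpha c als cs) Ha) as Na.
     pose proof (in_conv_nonneg _ _ _ (suppR0_nonneg n r alpha c als cs) Hb) as Nb.
     assert (Z : forall l, (l < n)%nat -> l <> i -> a l = 0 /\ b l = 0).
     { intros l Hl Hli. specialize (Heq l Hl). unfold toR in Heq. rewrite Ho in Heq by auto. simpl in Heq.
       specialize (Na l Hl); specialize (Nb l Hl). split; nra. }
     assert (a i <= INR (alpha j i)) by (apply (axis_bound n S0 i _ a Hi (suppR0_nonneg n r alpha c als cs) HM Ha); intros; apply Z; auto).
     assert (b i <= INR (alpha j i)) by (apply (axis_bound n S0 i _ b Hi (suppR0_nonneg n r alpha c als cs) HM Hb); intros; apply Z; auto).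
     intros l Hl. destruct (Nat.eq_dec l i) as [->|Hli].
     + specialize (Heq i Hi). unfold toR in *. nra.
     + unfold toR. rewrite Ho by auto. simpl. apply Z; auto. }
   intros a b t Ha Hb Ht Heq. split. eapply key; eauto.
   apply (key b a (1 - t) Hb Ha ltac:(lra)). intros l Hl. rewrite Heq by auto. ring. Qed.

Lemma C3_from n r alpha c als cs lam : HYP n r alpha c als cs lam -> coercive n (circ_eval n r alpha c als cs) ->
  CondC3 n r alpha c als cs.
Proof. intros HH Hco i Hi. destruct (axis_vertex _ _ _ _ _ _ _ HH Hco i Hi) as [j [Hj [Ho [Hge Hv]]]].
 pose proof HH as [[_ [_ [Hal _]]] _]. destruct (Hal j Hj) as [Hev _]. destruct (Hev i Hi) as [k Hk].
 exists k. split. lia. split.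
 - eapply is_vertex_eqn; eauto. intros l Hl. unfold toR. destruct (Nat.eqb_spec l i). subst; rewrite Hk; auto.
   rewrite Ho; auto.
 - intros Hz. specialize (Hz i Hi). simpl in Hz. rewrite Nat.eqb_refl in Hz. unfold zeroPt in Hz.
   apply (not_0_INR (2 * k)); auto; lia. Qed.

Lemma C3_struct n r alpha c als cs lam : HYP n r alpha c als cs lam -> CondC3 n r alpha c als cs ->
  forall i, (i < n)%nat -> exists j k, (j <= r)%nat /\ (1 <= k)%nat /\ on_ax n i (alpha j) /\ alpha j i = (2 * k)%nat.
Proof. intros HH H3 i Hi. destruct (H3 i Hi) as [k [Hk Hv]].
 destruct (V_main _ _ _ _ _ _ _ HH _ Hv) as [j [Hj He]]. exists j, k. repeat split; auto.
 - intros l Hl Hli. specialize (He l Hl). unfold toR in He. destruct (Nat.eqb_spec l i); [lia|]. apply INR_eq; simpl; lra.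
 - specialize (He i Hi). cbv beta in He. rewrite Nat.eqb_refl in He. unfold toR in He. apply INR_eq; auto. Qed.

Lemma exp_le' x y : x <= y -> exp x <= exp y.
Proof. intros [H|H]. left; apply exp_increasing; auto. subst; lra. Qed.
Lemma exp_le_inv x y : exp x <= exp y -> x <= y.
Proof. intros H. destruct (Rle_dec x y); auto. assert (exp y < exp x) by (apply exp_increasing; lra). lra. Qed.
Lemma ln_le' x y : 0 < x -> x <= y -> ln x <= ln y.
Proof. intros Hx [H|H]. left; apply ln_increasing; auto. subst; lra. Qed.

Lemma amgm m nu a : (forall j, (j < m)%nat -> nu j > 0) -> rsum m nu = 1 -> (forall j, (j < m)%nat -> a j > 0) ->
  exp (rsum m (fun j => nu j * ln (a j))) <= rsum m (fun j => nu j * a j).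
Proof. intros Hnu Hs Ha. set (A := rsum m (fun j => nu j * a j)).
 destruct (rsum_pos_ex m nu) as [k [Hk Hpk]]; [lra|].
 assert (HA : 0 < A). { apply Rlt_le_trans with (nu k * a k). specialize (Ha k Hk); nra.
   apply (rsum_single_le _ (fun j => nu j * a j)); auto. intros j Hj; specialize (Ha j Hj); specialize (Hnu j Hj); nra. }
 rewrite <- (exp_ln A) by auto. apply exp_le'.
 apply Rle_trans with (rsum m (fun j => nu j * (ln A + a j / A - 1))).
 - apply rsum_le. intros j Hj. apply Rmult_le_compat_l. left; apply Hnu; auto.
   assert (Haj : 0 < a j) by (apply Ha; auto).
   assert (HiA : 0 < / A) by (apply Rinv_0_lt_compat; auto).
   pose proof (exp_ineq1_le (ln (a j / A))) as H.
   rewrite exp_ln in H by (apply Rdiv_lt_0_compat; auto).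
   unfold Rdiv in H. rewrite ln_mult, ln_Rinv in H by auto. unfold Rdiv. lra.
 - right. rewrite (rsum_ext _ _ (fun j => (ln A - 1) * nu j + / A * (nu j * a j))).
   rewrite rsum_plus, !rsum_scal, Hs. fold A. field. lra. intros; unfold Rdiv; ring. Qed.

Definition gpart n r alpha c x := rsum (S r) (fun j => c j * monom n (alpha j) x).
Definition Lm n b x := rsum n (fun i => INR (b i) * ln (Rabs (x i))).

Lemma gpart_term_nonneg n r alpha c als cs lam : HYP n r alpha c als cs lam -> forall x j, (j < S r)%nat ->
  0 <= c j * monom n (alpha j) x.
Proof. intros [[_ [_ [Hal _]]] _] x j Hj. destruct (Hal j ltac:(lia)) as [He Hc].
 apply Rmult_le_pos. lra. apply monom_even_nonneg; auto. Qed.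

Lemma gpart_nonneg n r alpha c als cs lam : HYP n r alpha c als cs lam -> forall x, 0 <= gpart n r alpha c x.
Proof. intros HH x. apply rsum_nonneg. intros; eapply gpart_term_nonneg; eauto. Qed.

Lemma mon_alpha_exp n r alpha c als cs lam : HYP n r alpha c als cs lam -> forall x, monom n als x <> 0 ->
  forall j, (j <= r)%nat -> monom n (alpha j) x = exp (Lm n (alpha j) x).
Proof. intros HH x Hm j Hj. pose proof HH as [[_ [_ [Hal _]]] [[_ Hb2] Hpos]].
 rewrite <- (Rabs_right (monom n (alpha j) x)). apply monom_exp.
 - intros i Hi Hp Hx. apply Hm. apply (monom_zero n als x i Hi); auto.
   apply INR_lt. simpl. rewrite Hb2 by auto. apply Rlt_le_trans with (lam j * INR (alpha j i)).
   apply Rmult_lt_0_compat. apply Hpos; auto. apply lt_0_INR; auto.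
   apply (rsum_single_le _ (fun j => lam j * INR (alpha j i))). intros k Hk. apply Rmult_le_pos. left; apply Hpos; lia. apply pos_INR. lia.
 - apply Rle_ge. apply monom_even_nonneg. apply Hal; auto. Qed.

Lemma mon_als_exp n x b : monom n b x <> 0 -> Rabs (monom n b x) = exp (Lm n b x).
Proof. intros Hm. apply monom_exp. intros i Hi Hp Hx. apply Hm. apply (monom_zero n b x i Hi); auto. Qed.

Lemma Ls_decomp n r alpha als mu x : (forall i, (i < n)%nat -> INR (als i) = rsum (S r) (fun j => mu j * INR (alpha j i))) ->
  Lm n als x = rsum (S r) (fun j => mu j * Lm n (alpha j) x).
Proof. intros H. unfold Lm. rewrite (rsum_ext n _ (fun i => rsum (S r) (fun j => mu j * (INR (alpha j i) * ln (Rabs (x i)))))).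
 rewrite rsum_swap. apply rsum_ext; intros. rewrite rsum_scal; auto.
 intros i Hi. rewrite H by auto. rewrite (Rmult_comm _ (ln _)), <- rsum_scal. apply rsum_ext; intros; ring. Qed.

Definition lnTh r c nu := rsum (S r) (fun j => nu j * ln (c j / nu j)).

Lemma KB n r alpha c als cs lam nu rho : HYP n r alpha c als cs lam ->
  (forall j, (j <= r)%nat -> nu j > 0) -> rsum (S r) nu = 1 -> 0 < rho ->
  (forall i, (i < n)%nat -> INR (als i) = rsum (S r) (fun j => (rho * nu j) * INR (alpha j i))) ->
  forall x, monom n als x <> 0 -> 0 < gpart n r alpha c x /\
     rho * lnTh r c nu + Lm n als x <= rho * ln (gpart n r alpha c x).
Proof. intros HH Hnu Hs Hrho Hb x Hm. pose proof HH as [[_ [_ [Hal _]]] _].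
 pose proof (amgm (S r) nu (fun j => c j * exp (Lm n (alpha j) x) / nu j)) as AM.
 assert (Ha : forall j, (j < S r)%nat -> c j * exp (Lm n (alpha j) x) / nu j > 0).
 { intros j Hj. destruct (Hal j ltac:(lia)) as [_ Hc]. specialize (Hnu j ltac:(lia)).
   apply Rdiv_lt_0_compat; auto. apply Rmult_lt_0_compat; auto. apply exp_pos. }
 specialize (AM ltac:(intros; apply Hnu; lia) Hs Ha).
 rewrite (rsum_ext _ (fun j => nu j * (c j * exp (Lm n (alpha j) x) / nu j)) (fun j => c j * monom n (alpha j) x)) in AM.
 2:{ intros j Hj. rewrite (mon_alpha_exp _ _ _ _ _ _ _ HH x Hm j) by lia. field. specialize (Hnu j ltac:(lia)); lra. }
 rewrite (rsum_ext _ (fun j => nu j * ln (c j * exp (Lm n (alpha j) x) / nu j)) (fun j => nu j * ln (c j / nu j) + nu j * Lm n (alpha j) x)) in AM.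
 2:{ intros j Hj. destruct (Hal j ltac:(lia)) as [_ Hc]. specialize (Hnu j ltac:(lia)).
     replace (c j * exp (Lm n (alpha j) x) / nu j) with (c j / nu j * exp (Lm n (alpha j) x)) by (field; lra).
     rewrite ln_mult, ln_exp. ring. apply Rdiv_lt_0_compat; auto. apply exp_pos. }
 rewrite rsum_plus in AM. fold (gpart n r alpha c x) in AM. fold (lnTh r c nu) in AM.
 assert (Hg : 0 < gpart n r alpha c x) by (eapply Rlt_le_trans; [apply exp_pos| apply AM]).
 split; auto.
 rewrite <- (exp_ln (gpart n r alpha c x)) in AM by auto. apply exp_le_inv in AM.
 rewrite (Ls_decomp n r alpha als (fun j => rho * nu j) x Hb).
 rewrite (rsum_ext _ _ (fun j => rho * (nu j * Lm n (alpha j) x))) by (intros; ring). rewrite rsum_scal.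
 nra. Qed.

Lemma Theta_exp r c lam : Theta r c lam = exp (lnTh r c lam).
Proof. unfold Theta, lnTh, Rpower. apply rprod_exp. Qed.

Lemma boundB n r alpha c als cs lam : HYP n r alpha c als cs lam -> forall x,
  Theta r c lam * Rabs (monom n als x) <= gpart n r alpha c x.
Proof. intros HH x. destruct (Req_dec (monom n als x) 0) as [E|E].
 - rewrite E, Rabs_R0, Rmult_0_r. eapply gpart_nonneg; eauto.
 - pose proof HH as [_ [[Hb1 Hb2] Hpos]].
   destruct (KB n r alpha c als cs lam lam 1 HH ltac:(auto) Hb1 ltac:(lra)) with (x := x) as [Hg Hk]; auto.
   { intros i Hi. rewrite Hb2 by auto. apply rsum_ext; intros; ring. }
   rewrite Theta_exp, mon_als_exp by auto. rewrite <- exp_plus. rewrite <- (exp_ln (gpart n r alpha c x)) by auto.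
   apply exp_le'. lra. Qed.

Fixpoint rmin (m : nat) (h : nat -> R) : R :=
  match m with O => h O | S k => Rmin (rmin k h) (h (S k)) end.
Lemma rmin_le m h j : (j <= m)%nat -> rmin m h <= h j.
Proof. induction m; intros Hj; simpl. assert (j = 0%nat) by lia; subst; lra.
 destruct (Nat.eq_dec j (S m)) as [->|]. apply Rmin_r. eapply Rle_trans. apply Rmin_l. apply IHm; lia. Qed.
Lemma rmin_pos m h : (forall j, (j <= m)%nat -> h j > 0) -> rmin m h > 0.
Proof. induction m; intros H; simpl. apply H; lia. apply Rmin_glb_lt. apply IHm; intros; apply H; lia. apply H; lia. Qed.

Lemma pow2k_ge x k : (1 <= k)%nat -> x ^ 2 - 1 <= x ^ (2 * k).
Proof. intros Hk. destruct (Rle_dec 1 (x ^ 2)).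
 - rewrite pow_mult. pose proof (Rle_pow (x ^ 2) 1 k r Hk). rewrite pow_1 in H. lra.
 - pose proof (pow_even_nonneg x k). lra. Qed.

Lemma GINF n r alpha c als cs lam : HYP n r alpha c als cs lam ->
  (forall i, (i < n)%nat -> exists j k, (j <= r)%nat /\ (1 <= k)%nat /\ on_ax n i (alpha j) /\ alpha j i = (2 * k)%nat) ->
  forall G, exists K, forall x, norm2 n x > K -> gpart n r alpha c x >= G.
Proof. intros HH Hst G. pose proof HH as [[_ [_ [Hal _]]] _].
 set (cm := rmin r c). assert (Hcm : cm > 0) by (apply rmin_pos; intros; apply Hal; auto).
 set (T := Rabs G / cm + 1). assert (HT0 : 0 <= Rabs G / cm) by (apply Rdiv_le_0_compat; [apply Rabs_pos|lra]).
 exists (sqrt (INR n * T)). intros x Hx.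
 assert (Ex : exists i, (i < n)%nat /\ x i ^ 2 > T).
 { apply NNPP; intros Hn. assert (rsum n (fun i => x i ^ 2) <= INR n * T).
   { apply rsum_bound. intros i Hi. apply Rnot_lt_le. intros Hc. apply Hn. exists i; split; auto. }
   unfold norm2 in Hx. apply sqrt_le_1_alt in H. lra. }
 destruct Ex as [i [Hi HxT]]. destruct (Hst i Hi) as [j [k [Hj [Hk [Ho Ha]]]]].
 assert (c j * monom n (alpha j) x <= gpart n r alpha c x).
 { apply (rsum_single_le _ (fun j => c j * monom n (alpha j) x)). intros; eapply gpart_term_nonneg; eauto. lia. }
 rewrite (monom_axis n (alpha j) x i Hi Ho), Ha in H.
 pose proof (pow2k_ge (x i) k Hk). assert (cm <= c j) by (apply rmin_le; auto).
 assert (cm * (x i ^ 2 - 1) <= c j * (x i ^ 2 - 1)) by (apply Rmult_le_compat_r; unfold T in HxT; lra).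
 assert (c j * (x i ^ 2 - 1) <= c j * x i ^ (2 * k)) by (apply Rmult_le_compat_l; [apply Hal in Hj; lra| lra]).
 assert (cm * (x i ^ 2 - 1) > cm * (Rabs G / cm)) by (apply Rmult_lt_compat_l; auto; unfold T in HxT; lra).
 replace (cm * (Rabs G / cm)) with (Rabs G) in H4 by (field; lra).
 pose proof (Rle_abs G). lra. Qed.

Lemma f_ge n r alpha c als cs x : circ_eval n r alpha c als cs x >= gpart n r alpha c x - Rabs cs * Rabs (monom n als x).
Proof. unfold circ_eval, gpart. rewrite <- Rabs_mult. pose proof (Rle_abs (- (cs * monom n als x))). rewrite Rabs_Ropp in H. lra. Qed.

Lemma Theta_pos r c lam : Theta r c lam > 0.
Proof. rewrite Theta_exp. apply exp_pos. Qed.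

Lemma coercive_B n r alpha c als cs lam : HYP n r alpha c als cs lam -> CondC3 n r alpha c als cs ->
  (even_vec n als -> cs > - Theta r c lam) -> (~ even_vec n als -> Rabs cs < Theta r c lam) ->
  coercive n (circ_eval n r alpha c als cs).
Proof. intros HH H3 He Ho. pose proof (Theta_pos r c lam) as HT.
 assert (Hd : exists d, d > 0 /\ forall x, circ_eval n r alpha c als cs x >= d * gpart n r alpha c x).
 { destruct (classic (even_vec n als /\ cs >= 0)) as [[Hev Hc]|Hn].
   - exists 1. split. lra. intros x. unfold circ_eval. fold (gpart n r alpha c x).
     pose proof (monom_even_nonneg n als x Hev). nra.
   - assert (Rabs cs < Theta r c lam).
     { destruct (classic (even_vec n als)) as [Hev|Hev]; auto. assert (cs < 0) by (apply Rnot_ge_lt; intros Hc; apply Hn; auto).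
       rewrite Rabs_left by auto. specialize (He Hev). lra. }
     exists (1 - Rabs cs / Theta r c lam). split.
     { assert (Rabs cs / Theta r c lam < 1) by (apply (Rmult_lt_reg_r (Theta r c lam)); auto; unfold Rdiv; rewrite Rmult_assoc, Rinv_l; lra). lra. }
     intros x. pose proof (f_ge n r alpha c als cs x). pose proof (boundB _ _ _ _ _ _ _ HH x).
     assert (Rabs (monom n als x) <= gpart n r alpha c x / Theta r c lam).
     { apply (Rmult_le_reg_l (Theta r c lam)); auto. unfold Rdiv. rewrite <- Rmult_assoc, (Rmult_comm _ (gpart _ _ _ _ _)), Rmult_assoc, Rinv_r; lra. }
     assert (Rabs cs * Rabs (monom n als x) <= Rabs cs * (gpart n r alpha c x / Theta r c lam)) by (apply Rmult_le_compat_l; auto; apply Rabs_pos).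
     unfold Rdiv in *. nra. }
 destruct Hd as [d [Hd Hf]].
 intros M. destruct (GINF _ _ _ _ _ _ _ HH (C3_struct _ _ _ _ _ _ _ HH H3) ((Rabs M + 1) / d)) as [K HK].
 exists K. intros x Hx. specialize (HK x Hx). specialize (Hf x).
 assert (d * gpart n r alpha c x >= d * ((Rabs M + 1) / d)) by (apply Rle_ge, Rmult_le_compat_l; lra).
 replace (d * ((Rabs M + 1) / d)) with (Rabs M + 1) in H by (field; lra). pose proof (Rle_abs M). lra. Qed.

Lemma choice_nat (P : nat -> nat -> nat -> Prop) m : (forall i, (i < m)%nat -> exists j k, P i j k) ->
  exists tau kap : nat -> nat, forall i, (i < m)%nat -> P i (tau i) (kap i).
Proof. induction m; intros H. exists (fun _ => 0%nat), (fun _ => 0%nat). intros; lia.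
 destruct IHm as [t [k Ht]]. intros; apply H; lia. destruct (H m ltac:(lia)) as [j [k0 Hj]].
 exists (fun i => if Nat.eqb i m then j else t i), (fun i => if Nat.eqb i m then k0 else k i).
 intros i Hi. destruct (Nat.eqb_spec i m). subst; auto. apply Ht; lia. Qed.

Lemma NoDup_map_inj {A B} (f : A -> B) l : NoDup l -> (forall x y, In x l -> In y l -> f x = f y -> x = y) -> NoDup (map f l).
Proof. induction l; intros Hn Hi; simpl. constructor. inversion Hn; subst. constructor.
 - intros Hin. apply in_map_iff in Hin as [y [Hy Hyl]]. assert (y = a) by (apply Hi; simpl; auto). subst; contradiction.
 - apply IHl; auto. intros; apply Hi; simpl; auto. Qed.


Definition TAU n r alpha (tau kap : nat -> nat) :=
  forall i, (i < n)%nat -> (tau i <= r)%nat /\ (1 <= kap i)%nat /\ on_ax n i (alpha (tau i)) /\ alpha (tau i) i = (2 * kap i)%nat.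

Lemma tau_exists n r alpha c als cs lam : HYP n r alpha c als cs lam -> CondC3 n r alpha c als cs ->
  exists tau kap, TAU n r alpha tau kap.
Proof. intros HH H3. apply (choice_nat (fun i j k => (j <= r)%nat /\ (1 <= k)%nat /\ on_ax n i (alpha j) /\ alpha j i = (2 * k)%nat)).
 apply (C3_struct _ _ _ _ _ _ _ HH H3). Qed.

Lemma tau_coord n r alpha tau kap : TAU n r alpha tau kap -> forall i l, (i < n)%nat -> (l < n)%nat ->
  alpha (tau i) l = if Nat.eqb i l then (2 * kap i)%nat else 0%nat.
Proof. intros HT i l Hi Hl. destruct (HT i Hi) as [_ [_ [Ho Ha]]]. destruct (Nat.eqb_spec i l). subst; auto. apply Ho; auto. Qed.

Lemma tau_inj n r alpha tau kap : TAU n r alpha tau kap -> forall i i', (i < n)%nat -> (i' < n)%nat -> tau i = tau i' -> i = i'.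
Proof. intros HT i i' Hi Hi' E. destruct (Nat.eq_dec i i'); auto. exfalso.
 pose proof (tau_coord _ _ _ _ _ HT i' i' Hi' Hi') as A1. rewrite <- E in A1.
 rewrite (tau_coord _ _ _ _ _ HT i i' Hi Hi') in A1. destruct (HT i' Hi') as [_ [Hk _]].
 rewrite Nat.eqb_refl in A1. destruct (Nat.eqb_spec i i'); lia. Qed.

Lemma tau_NoDup n r alpha tau kap : TAU n r alpha tau kap -> NoDup (map tau (seq 0 n)).
Proof. intros HT. apply NoDup_map_inj. apply seq_NoDup. intros x y Hx Hy. apply in_seq in Hx, Hy.
 apply (tau_inj _ _ _ _ _ HT); lia. Qed.

Lemma tau_incl n r alpha tau kap : TAU n r alpha tau kap -> incl (map tau (seq 0 n)) (seq 0 (S r)).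
Proof. intros HT x Hx. apply in_map_iff in Hx as [i [<- Hi]]. apply in_seq in Hi. apply in_seq.
 destruct (HT i ltac:(lia)); lia. Qed.

Lemma tau_n_le n r alpha tau kap : TAU n r alpha tau kap -> (n <= S r)%nat.
Proof. intros HT. pose proof (NoDup_incl_length (tau_NoDup _ _ _ _ _ HT) (tau_incl _ _ _ _ _ HT)).
 rewrite length_map, !length_seq in H. auto. Qed.

Lemma tau_missing n r alpha tau kap : TAU n r alpha tau kap -> r = n ->
  exists m, (m <= r)%nat /\ forall i, (i < n)%nat -> tau i <> m.
Proof. intros HT Hr. apply NNPP; intros Hn.
 assert (incl (seq 0 (S r)) (map tau (seq 0 n))).
 { intros j Hj. apply in_seq in Hj. apply NNPP; intros Hj'. apply Hn. exists j; split. lia.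
   intros i Hi E. apply Hj'. apply in_map_iff. exists i; split; auto. apply in_seq; lia. }
 pose proof (NoDup_incl_length (seq_NoDup (S r) 0) H). rewrite length_map, !length_seq in H0. lia. Qed.

Lemma tau_surj n r alpha tau kap : TAU n r alpha tau kap -> S r = n ->
  forall j, (j <= r)%nat -> exists i, (i < n)%nat /\ tau i = j.
Proof. intros HT Hr j Hj. pose proof (@NoDup_length_incl _ _ (seq 0 (S r)) (tau_NoDup _ _ _ _ _ HT)) as L.
 assert (incl (seq 0 (S r)) (map tau (seq 0 n))).
 { apply L. rewrite length_map, !length_seq; lia. apply (tau_incl _ _ _ _ _ HT). }
 assert (In j (map tau (seq 0 n))) by (apply H; apply in_seq; lia).
 apply in_map_iff in H0 as [i [Hi Hin]]. apply in_seq in Hin. exists i; split; auto; lia. Qed.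

Definition combc n (tau : nat -> nat) m (e : nat -> R) z j :=
  rsum n (fun i => if Nat.eqb (tau i) j then e i else 0) + (if Nat.eqb j m then z else 0).

Lemma comb_sum n r alpha tau kap m e z : TAU n r alpha tau kap -> (m <= r)%nat ->
  rsum (S r) (combc n tau m e z) = rsum n e + z.
Proof. intros HT Hm. unfold combc. rewrite rsum_plus, <- rsum_swap.
 rewrite (rsum_ind _ _ (fun _ => z)) by lia. f_equal. apply rsum_ext. intros i Hi.
 apply (rsum_ind' _ _ (fun _ => e i)). destruct (HT i Hi); lia. Qed.

Lemma comb_coord n r alpha tau kap m e z l : TAU n r alpha tau kap -> (m <= r)%nat -> (l < n)%nat ->
  rsum (S r) (fun j => combc n tau m e z j * INR (alpha j l)) = e l * INR (2 * kap l) + z * INR (alpha m l).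
Proof. intros HT Hm Hl. unfold combc.
 rewrite (rsum_ext _ _ (fun j => rsum n (fun i => if Nat.eqb (tau i) j then e i * INR (alpha j l) else 0) + (if Nat.eqb j m then z * INR (alpha j l) else 0))).
 2:{ intros j _. rewrite Rmult_plus_distr_r. f_equal. rewrite Rmult_comm, <- rsum_scal. apply rsum_ext; intros; destruct (Nat.eqb _ _); ring.
     destruct (Nat.eqb _ _); ring. }
 rewrite rsum_plus, <- rsum_swap. rewrite (rsum_ind _ _ (fun j => z * INR (alpha j l))) by lia. f_equal.
 rewrite (rsum_ext _ _ (fun i => if Nat.eqb i l then e i * INR (2 * kap i) else 0)).
 apply (rsum_ind _ _ (fun i => e i * INR (2 * kap i))); auto.
 intros i Hi. rewrite (rsum_ind' _ _ (fun j => e i * INR (alpha j l))). cbv beta.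
 rewrite (tau_coord _ _ _ _ _ HT i l Hi Hl). destruct (Nat.eqb i l); simpl; ring. destruct (HT i Hi); lia. Qed.

Lemma INR_2k_pos k : (1 <= k)%nat -> 0 < INR (2 * k).
Proof. intros. apply lt_0_INR. lia. Qed.

Lemma coercive_A n r alpha c als cs lam : HYP n r alpha c als cs lam -> r = n -> CondC3 n r alpha c als cs ->
  coercive n (circ_eval n r alpha c als cs).
Proof. intros HH Hrn H3. pose proof HH as [[_ [Hcs [Hal [_ [Haff _]]]]] [[Hb1 Hb2] Hpos]].
 destruct (tau_exists _ _ _ _ _ _ _ HH H3) as [tau [kap HT]].
 destruct (tau_missing _ _ _ _ _ HT Hrn) as [m [Hm Hmiss]].
 set (d := fun i => INR (alpha m i) / INR (2 * kap i)).
 assert (Hd2 : forall l, (l < n)%nat -> d l * INR (2 * kap l) = INR (alpha m l)).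
 { intros l Hl. unfold d. destruct (HT l Hl) as [_ [Hk _]]. pose proof (INR_2k_pos _ Hk). field; lra. }
 set (D := 1 - rsum n d).
 assert (HD : D <> 0).
 { intros HD0. set (om := combc n tau m d (-1)).
   assert (om m = 0).
   { apply Haff; auto. unfold om. rewrite (comb_sum _ _ _ _ _ _ _ _ HT Hm). unfold D in HD0; lra.
     intros l Hl. unfold om. rewrite (comb_coord _ _ _ _ _ _ _ _ l HT Hm Hl). rewrite Hd2 by auto. ring. }
   unfold om, combc in H. rewrite Nat.eqb_refl in H. rewrite (rsum_ext _ _ (fun _ => 0)) in H. rewrite rsum_zero in H. lra.
   intros i Hi. destruct (Nat.eqb_spec (tau i) m). exfalso; apply (Hmiss i Hi); auto. auto. }
 set (nu := combc n tau m (fun i => - d i / D) (1 / D)).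
 assert (Hns : rsum (S r) nu = 1).
 { unfold nu. rewrite (comb_sum _ _ _ _ _ _ _ _ HT Hm). unfold Rdiv.
   rewrite (rsum_ext _ _ (fun i => (- / D) * d i)) by (intros; ring). rewrite rsum_scal. fold (Rdiv 1 D).
   unfold D in *. field. auto. }
 assert (Hnc : forall l, (l < n)%nat -> rsum (S r) (fun j => nu j * INR (alpha j l)) = 0).
 { intros l Hl. unfold nu. rewrite (comb_coord _ _ _ _ _ _ _ _ l HT Hm Hl).
   rewrite <- (Hd2 l Hl). field; auto. }
 set (s := rmin r (fun j => lam j / (1 + Rabs (nu j))) / 2).
 assert (Hs0 : s > 0). { unfold s. assert (rmin r (fun j => lam j / (1 + Rabs (nu j))) > 0); [|lra].
   apply rmin_pos. intros j Hj. apply Rdiv_lt_0_compat. apply Hpos; auto. pose proof (Rabs_pos (nu j)); lra. }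
 assert (Hsj : forall j, (j <= r)%nat -> s * (1 + Rabs (nu j)) <= lam j / 2).
 { intros j Hj. pose proof (rmin_le r (fun j => lam j / (1 + Rabs (nu j))) j Hj). cbv beta in H. fold s in H.
   pose proof (Rabs_pos (nu j)). unfold s in *.
   apply (Rmult_le_compat_r (1 + Rabs (nu j))) in H; [|lra]. unfold Rdiv in *.
   rewrite Rmult_assoc, Rinv_l in H by lra. lra. }
 assert (Hl0 : lam 0%nat <= 1). { rewrite <- Hb1. apply (rsum_single_le _ lam). intros; left; apply Hpos; lia. lia. }
 assert (Hs1 : s <= 1 / 2). { specialize (Hsj 0%nat ltac:(lia)). pose proof (Rabs_pos (nu 0%nat)). nra. }
 set (mu := fun j => lam j - s * nu j).
 assert (Hmu : forall j, (j <= r)%nat -> mu j > 0).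
 { intros j Hj. unfold mu. specialize (Hsj j Hj). pose proof (Rle_abs (nu j)). specialize (Hpos j Hj). nra. }
 set (rho := 1 - s).
 set (nu' := fun j => mu j / rho).
 assert (Hn'pos : forall j, (j <= r)%nat -> nu' j > 0) by (intros; unfold nu'; apply Rdiv_lt_0_compat; [apply Hmu; auto| unfold rho; lra]).
 assert (Hn's : rsum (S r) nu' = 1).
 { unfold nu', Rdiv. rewrite (rsum_ext _ _ (fun j => / rho * mu j)) by (intros; ring). rewrite rsum_scal.
   unfold mu. rewrite rsum_minus, rsum_scal, Hb1, Hns. unfold rho. field. lra. }
 assert (Hb' : forall i, (i < n)%nat -> INR (als i) = rsum (S r) (fun j => (rho * nu' j) * INR (alpha j i))).
 { intros i Hi. rewrite (rsum_ext _ _ (fun j => lam j * INR (alpha j i) - s * (nu j * INR (alpha j i)))).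
   rewrite rsum_minus, rsum_scal, Hnc, <- Hb2 by auto. ring.
   intros j _. unfold nu', mu. field. unfold rho; lra. }
 pose proof (KB n r alpha c als cs lam nu' rho HH Hn'pos Hn's ltac:(unfold rho; lra) Hb') as Hkb.
 set (T := lnTh r c nu').
 set (C0 := ln (Rabs cs) - rho * T + ln 2).
 set (G0 := exp (C0 / (1 - rho))).
 intros M. destruct (GINF _ _ _ _ _ _ _ HH (C3_struct _ _ _ _ _ _ _ HH H3) (G0 + 2 * Rabs M + 1)) as [K HK].
 exists K. intros x Hx. specialize (HK x Hx). pose proof (f_ge n r alpha c als cs x) as Hf.
 assert (HG0 : 0 < G0) by apply exp_pos. pose proof (Rabs_pos M). pose proof (Rle_abs M).
 assert (Hhalf : Rabs cs * Rabs (monom n als x) <= gpart n r alpha c x / 2).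
 { destruct (Req_dec (monom n als x) 0) as [E|E].
   - rewrite E, Rabs_R0, Rmult_0_r. pose proof (gpart_nonneg _ _ _ _ _ _ _ HH x). lra.
   - destruct (Hkb x E) as [Hg Hk]. set (g := gpart n r alpha c x) in *.
     assert (Hlg : C0 / (1 - rho) <= ln g).
     { rewrite <- (ln_exp (C0 / (1 - rho))). apply ln_le'. apply exp_pos. fold G0. lra. }
     assert (C0 <= (1 - rho) * ln g).
     { apply (Rmult_le_compat_l (1 - rho)) in Hlg; [|unfold rho; lra]. unfold Rdiv in Hlg.
       rewrite <- Rmult_assoc, (Rmult_comm (1 - rho) C0), Rmult_assoc, Rinv_r in Hlg by (unfold rho; lra). lra. }
     assert (Hcs0 : 0 < Rabs cs) by (apply Rabs_pos_lt; auto).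
     rewrite mon_als_exp by auto. rewrite <- (exp_ln (Rabs cs)) by auto. rewrite <- exp_plus.
     rewrite <- (exp_ln (g / 2)) by lra. apply exp_le'. unfold Rdiv. rewrite ln_mult, ln_Rinv by lra.
     unfold C0, T in *. lra. }
 lra. Qed.

Lemma rsum_bij n r alpha tau kap h : TAU n r alpha tau kap -> S r = n ->
  rsum (S r) h = rsum n (fun i => h (tau i)).
Proof. intros HT Hn.
 rewrite (rsum_ext (S r) h (fun j => rsum n (fun i => if Nat.eqb (tau i) j then h j else 0))).
 - rewrite <- rsum_swap. apply rsum_ext. intros i Hi. apply (rsum_ind' _ _ h). destruct (HT i Hi); lia.
 - intros j Hj. destruct (tau_surj _ _ _ _ _ HT Hn j ltac:(lia)) as [i0 [Hi0 E]].
   rewrite (rsum_ext _ _ (fun i => if Nat.eqb i i0 then h j else 0)). symmetry. apply (rsum_ind _ _ (fun _ => h j)); auto.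
   intros i Hi. destruct (Nat.eqb_spec i i0), (Nat.eqb_spec (tau i) j); auto; subst.
   exfalso; auto. exfalso; apply n0. apply (tau_inj _ _ _ _ _ HT); auto. Qed.

Lemma alpha_full n r alpha tau kap : TAU n r alpha tau kap -> S r = n ->
  forall j l, (j <= r)%nat -> (l < n)%nat -> alpha j l = if Nat.eqb j (tau l) then (2 * kap l)%nat else 0%nat.
Proof. intros HT Hn j l Hj Hl. destruct (tau_surj _ _ _ _ _ HT Hn j Hj) as [i [Hi <-]].
 rewrite (tau_coord _ _ _ _ _ HT i l Hi Hl). destruct (Nat.eqb_spec i l), (Nat.eqb_spec (tau i) (tau l)); subst; auto.
 exfalso; auto. exfalso; apply n0. apply (tau_inj _ _ _ _ _ HT); auto. Qed.

Lemma als_coord n r alpha c als cs lam tau kap : HYP n r alpha c als cs lam -> TAU n r alpha tau kap -> S r = n ->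
  forall l, (l < n)%nat -> INR (als l) = lam (tau l) * INR (2 * kap l).
Proof. intros HH HT Hn l Hl. pose proof HH as [_ [[_ Hb2] _]]. rewrite Hb2 by auto.
 rewrite (rsum_ext _ _ (fun j => if Nat.eqb j (tau l) then lam j * INR (2 * kap l) else 0)).
 apply (rsum_ind _ _ (fun j => lam j * INR (2 * kap l))). destruct (HT l Hl); lia.
 intros j Hj. rewrite (alpha_full _ _ _ _ _ HT Hn j l) by (auto; lia). destruct (Nat.eqb _ _); simpl; ring. Qed.

Lemma pow_exp a k : exp a ^ k = exp (INR k * a).
Proof. induction k. simpl. rewrite Rmult_0_l, exp_0; auto. simpl pow. rewrite IHk, S_INR, <- exp_plus. f_equal; ring. Qed.

Definition yv (c lam : nat -> R) (tau : nat -> nat) l := lam (tau l) / c (tau l).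
Definition Ev (c lam : nat -> R) (tau kap : nat -> nat) l z := (ln (yv c lam tau l) + z) / INR (2 * kap l).
Definition xz (c lam : nat -> R) (tau kap : nat -> nat) (l0 : nat) z : nat -> R :=
  fun l => if Nat.eqb l l0 then - exp (Ev c lam tau kap l z) else exp (Ev c lam tau kap l z).

Lemma eval_xz n r alpha c als cs lam tau kap : HYP n r alpha c als cs lam -> TAU n r alpha tau kap -> S r = n ->
  forall l0 z, circ_eval n r alpha c als cs (xz c lam tau kap l0 z) =
    exp z + cs * ((if Nat.ltb l0 n then (-1) ^ (als l0) else 1) * (exp z / Theta r c lam)).
Proof. intros HH HT Hn l0 z. pose proof HH as [[_ [_ [Hal _]]] [[Hb1 Hb2] Hpos]].
 assert (Hy : forall l, (l < n)%nat -> 0 < yv c lam tau l).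
 { intros l Hl. destruct (HT l Hl) as [Ht _]. unfold yv. apply Rdiv_lt_0_compat. apply Hpos; auto. apply Hal; auto. }
 unfold circ_eval. f_equal.
 - rewrite (rsum_ext _ _ (fun j => exp z * lam j)). rewrite rsum_scal, Hb1. ring.
   intros j Hj. destruct (tau_surj _ _ _ _ _ HT Hn j ltac:(lia)) as [i [Hi <-]].
   destruct (HT i Hi) as [Htr [Hk [Ho Ha]]].
   rewrite (monom_axis n _ _ i Hi Ho), Ha. unfold xz.
   assert (E1 : (if Nat.eqb i l0 then - exp (Ev c lam tau kap i z) else exp (Ev c lam tau kap i z)) ^ (2 * kap i) = exp (Ev c lam tau kap i z) ^ (2 * kap i))
     by (destruct (Nat.eqb i l0); auto; apply pow_even_opp).
   rewrite E1, pow_exp. unfold Ev. pose proof (INR_2k_pos _ Hk).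
   replace (INR (2 * kap i) * ((ln (yv c lam tau i) + z) / INR (2 * kap i))) with (ln (yv c lam tau i) + z) by (field; lra).
   rewrite exp_plus, exp_ln by auto. unfold yv. field_simplify. auto. apply Rgt_not_eq, Hal; auto.
 - f_equal.
   assert (Hm : monom n als (xz c lam tau kap l0 z) = (if Nat.ltb l0 n then (-1) ^ (als l0) else 1) * monom n als (fun l => exp (Ev c lam tau kap l z))).
   { destruct (Nat.ltb_spec l0 n). unfold xz. apply monom_flip; auto.
     rewrite Rmult_1_l. apply monom_ext_x. intros i Hi. unfold xz. destruct (Nat.eqb_spec i l0); [lia|auto]. }
   rewrite Hm. f_equal. rewrite monom_exp_pos.
   rewrite (rsum_ext _ _ (fun l => lam (tau l) * ln (yv c lam tau l) + z * lam (tau l))).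
   2:{ intros l Hl. rewrite (als_coord _ _ _ _ _ _ _ _ _ HH HT Hn l Hl). unfold Ev.
       destruct (HT l Hl) as [_ [Hk _]]. pose proof (INR_2k_pos _ Hk). field. lra. }
   rewrite rsum_plus, rsum_scal.
   rewrite <- (rsum_bij _ _ _ _ _ lam HT Hn), Hb1.
   unfold yv. rewrite <- (rsum_bij _ _ _ _ _ (fun j => lam j * ln (lam j / c j)) HT Hn).
   rewrite Theta_exp. unfold lnTh.
   rewrite (rsum_ext _ (fun j => lam j * ln (lam j / c j)) (fun j => - (lam j * ln (c j / lam j)))).
   2:{ intros j Hj. assert (lam j > 0) by (apply Hpos; lia). assert (c j > 0) by (apply Hal; lia).
       replace (lam j / c j) with (/ (c j / lam j)) by (field; lra). rewrite ln_Rinv. ring. apply Rdiv_lt_0_compat; lra. }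
   rewrite (rsum_ext _ (fun j => - (lam j * ln (c j / lam j))) (fun j => (-1) * (lam j * ln (c j / lam j)))) by (intros; ring).
   rewrite rsum_scal. unfold Rdiv. rewrite <- (exp_Ropp). rewrite <- exp_plus. f_equal. ring. Qed.

Lemma notco n r alpha c als cs lam tau kap : HYP n r alpha c als cs lam -> TAU n r alpha tau kap -> S r = n ->
  coercive n (circ_eval n r alpha c als cs) -> forall l0, ~ (forall z, circ_eval n r alpha c als cs (xz c lam tau kap l0 z) <= 0).
Proof. intros HH HT Hn Hco l0 Hle. destruct (Hco 0) as [K HK].
 destruct (HT 0%nat ltac:(lia)) as [_ [Hk _]]. pose proof (INR_2k_pos _ Hk).
 set (z := INR (2 * kap 0%nat) * Rabs K - ln (yv c lam tau 0%nat)).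
 specialize (HK (xz c lam tau kap l0 z)). specialize (Hle z).
 assert (norm2 n (xz c lam tau kap l0 z) > K); [|specialize (HK H0); lra].
 eapply Rlt_le_trans; [|apply (norm2_ge n _ 0%nat); lia].
 assert (E : Rabs (xz c lam tau kap l0 z 0%nat) = exp (Rabs K)).
 { unfold xz. assert (Ev c lam tau kap 0%nat z = Rabs K) as ->. { unfold Ev, z. field. lra. }
   destruct (Nat.eqb 0 l0). rewrite Rabs_Ropp. apply Rabs_right; left; apply exp_pos. apply Rabs_right; left; apply exp_pos. }
 rewrite E. pose proof (exp_ineq1_le (Rabs K)). pose proof (Rle_abs K). lra. Qed.

Lemma neg_case n r alpha c als cs lam tau kap : HYP n r alpha c als cs lam -> TAU n r alpha tau kap -> S r = n ->
  coercive n (circ_eval n r alpha c als cs) -> ~ (cs <= - Theta r c lam).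
Proof. intros HH HT Hn Hco Hc. apply (notco _ _ _ _ _ _ _ _ _ HH HT Hn Hco n). intros z.
 rewrite (eval_xz _ _ _ _ _ _ _ _ _ HH HT Hn). rewrite Nat.ltb_irrefl, Rmult_1_l.
 pose proof (Theta_pos r c lam). pose proof (exp_pos z).
 assert (0 <= exp z / Theta r c lam) by (apply Rdiv_le_0_compat; lra).
 assert (cs * (exp z / Theta r c lam) <= - Theta r c lam * (exp z / Theta r c lam)) by (apply Rmult_le_compat_r; auto).
 replace (- Theta r c lam * (exp z / Theta r c lam)) with (- exp z) in H2 by (field; lra). lra. Qed.

Lemma theta_nec n r alpha c als cs lam : HYP n r alpha c als cs lam -> S r = n -> CondC3 n r alpha c als cs ->
  coercive n (circ_eval n r alpha c als cs) ->
  (even_vec n als -> cs > - Theta r c lam) /\ (~ even_vec n als -> Rabs cs < Theta r c lam).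
Proof. intros HH Hn H3 Hco. destruct (tau_exists _ _ _ _ _ _ _ HH H3) as [tau [kap HT]].
 pose proof (neg_case _ _ _ _ _ _ _ _ _ HH HT Hn Hco) as Hneg. pose proof (Theta_pos r c lam) as HTp.
 split.
 - intros _. apply Rnot_le_lt. auto.
 - intros Hev. apply Rnot_le_lt. intros Hge.
   destruct (Rle_dec cs (- Theta r c lam)) as [Hc|Hc]; [auto|].
   assert (Hcs : cs >= Theta r c lam).
   { destruct (Rle_dec 0 cs). rewrite Rabs_right in Hge; lra. rewrite Rabs_left in Hge; lra. }
   unfold even_vec in Hev. apply not_all_ex_not in Hev as [l0 Hl0]. apply imply_to_and in Hl0 as [Hl0 Hodd].
   destruct (Nat.Even_or_Odd (als l0)) as [Hv|[k Hk]]; [contradiction|].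
   apply (notco _ _ _ _ _ _ _ _ _ HH HT Hn Hco l0). intros z.
   rewrite (eval_xz _ _ _ _ _ _ _ _ _ HH HT Hn). destruct (Nat.ltb_spec l0 n); [|lia].
   rewrite Hk, Nat.add_1_r, pow_1_odd.
   pose proof (exp_pos z).
   assert (0 <= exp z / Theta r c lam) by (apply Rdiv_le_0_compat; lra).
   assert (Theta r c lam * (exp z / Theta r c lam) <= cs * (exp z / Theta r c lam)) by (apply Rmult_le_compat_r; lra).
   replace (Theta r c lam * (exp z / Theta r c lam)) with (exp z) in H2 by (field; lra). lra. Qed.

Lemma r0_pos n r alpha c als cs lam : HYP n r alpha c als cs lam -> r = 0%nat -> (0 < n)%nat ->
  coercive n (circ_eval n r alpha c als cs) -> c 0%nat + cs > 0.
Proof. intros HH Hr Hn Hco. destruct (step1 _ _ _ _ _ _ _ HH Hco 0%nat Hn) as [j [Hj [Ho Hge]]].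
 assert (j = 0%nat) by lia. subst j r.
 assert (Hf : forall t, circ_eval n 0 alpha c als cs (axpt 0 t) = (c 0%nat + cs) * t ^ (alpha 0%nat 0%nat)).
 { intros t. unfold circ_eval. simpl rsum.
   rewrite (monom_ext_b n als (alpha 0%nat)) by (apply (r0_als _ _ _ _ _ _ _ HH eq_refl)).
   rewrite (monom_axis n _ _ 0%nat Hn Ho). unfold axpt. simpl. ring. }
 apply Rnot_le_lt. intros Hle. destruct (Hco 0) as [K HK].
 specialize (HK (axpt 0 (Rabs K + 1))). rewrite norm2_axpt, Hf in HK by auto.
 pose proof (Rabs_pos K). pose proof (Rle_abs K). rewrite (Rabs_right (Rabs K + 1)) in HK by lra.
 assert (0 <= (Rabs K + 1) ^ alpha 0%nat 0%nat) by (apply pow_le; lra).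
 assert ((c 0%nat + cs) * (Rabs K + 1) ^ alpha 0%nat 0%nat <= 0) by nra. lra. Qed.

Theorem mainTheorem4 (n r : nat) (alpha : nat -> nat -> nat) (c : nat -> R)
  (als : nat -> nat) (cs : R) (lam : nat -> R) :
  is_circuit n r alpha c als cs ->
  bary n r alpha als lam ->
  (forall j, (j <= r)%nat -> lam j > 0) ->
  (coercive n (circ_eval n r alpha c als cs) <->
   ((r = n)%nat /\ CondC1 n r alpha c als cs /\ CondC2 n r alpha c als cs /\
      CondC3 n r alpha c als cs)
   \/
   ((S r = n)%nat /\ CondC1 n r alpha c als cs /\ CondC2 n r alpha c als cs /\
      CondC3 n r alpha c als cs /\
      (even_vec n als -> cs > - Theta r c lam) /\
      (~ even_vec n als -> Rabs cs < Theta r c lam))).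
Proof.
 intros Hc Hb Hl. assert (HH : HYP n r alpha c als cs lam) by (split; [|split]; auto).
 pose proof Hc as [Hrn [_ [Hal _]]].
 split.
 - intros Hco. pose proof (C3_from _ _ _ _ _ _ _ HH Hco) as H3.
   destruct (tau_exists _ _ _ _ _ _ _ HH H3) as [tau [kap HT]].
   pose proof (tau_n_le _ _ _ _ _ HT) as Hnr.
   assert (H1 : CondC1 n r alpha c als cs).
   { intros p Hp. destruct (V_main _ _ _ _ _ _ _ HH p Hp) as [j [Hj He]]. exists (alpha j). split; auto. apply Hal; auto. }
   assert (H2 : CondC2 n r alpha c als cs).
   { intros b Hb'. destruct (V_main _ _ _ _ _ _ _ HH _ Hb') as [j [Hj He]].
     assert (Hbj : forall i, (i < n)%nat -> b i = alpha j i) by (intros i Hi; apply INR_eq; apply He; auto).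
     destruct r as [|r'].
     + assert (j = 0%nat) by lia. subst j. rewrite (coef_r0 _ _ _ _ _ _ _ HH eq_refl b Hbj).
       apply (r0_pos _ _ _ _ _ _ _ HH eq_refl); auto.
       destruct n; [|lia]. exfalso. destruct Hb' as [_ Hz]. apply Hz. intros i Hi; lia.
     + rewrite (coef_alpha _ _ _ _ _ _ _ HH ltac:(lia) j b Hj Hbj). apply Hal; auto. }
   destruct (Nat.eq_dec r n) as [E|E].
   + left. auto.
   + right. assert (S r = n) by lia. repeat split; auto; apply (theta_nec _ _ _ _ _ _ _ HH); auto.
 - intros [[Hr [_ [_ H3]]] | [Hr [_ [_ [H3 [He Ho]]]]]].
   + apply (coercive_A _ _ _ _ _ _ _ HH Hr H3).
   + apply (coercive_B _ _ _ _ _ _ _ HH H3 He Ho).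
Qed.
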